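(* Let $p\geq 0$ and let $G$ be a nearly balanced bipartite graph of order $2n-1$. Then $G$ is $2p$-Hamilton-biconnected if and only if $cl_{n+p+1}(G)$ is $2p$-Hamilton-biconnected.
   Context: A bipartite graph $G=(X,Y;E)$ is nearly balanced if $|X|=|Y|+1$; it is Hamilton-biconnected if for any two distinct $u,v\in X$ there is a Hamiltonian path with ends $u,v$. A vertex set $W$ is balanced if $|W\cap X|=|W\cap Y|$; $G$ is $2p$-Hamilton-biconnected if for every balanced $W$ with $|W|=2p$, the subgraph induced by $V(G)\setminus W$ is Hamilton-biconnected. For an integer $r$, the $r$-biclosure $cl_r(G)$ of a bipartite graph $G=(X,Y;E)$ is the unique smallest bipartite graph $H$ on the same vertex set with the same bipartition such that $G\subseteq H$ and $d_H(x)+d_H(y)<r$ for every non-adjacent pair $x\in X$, $y\in Y$; it is obtained from $G$ by repeatedly joining non-adjacent $x\in X$, $y\in Y$ with degree sum at least $r$ until no such pair remains. *)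

(* Defs.v *)
From mathcomp Require Import all_boot.
Set Implicit Arguments. Unset Strict Implicit. Unset Printing Implicit Defensive.

(* A bipartite graph G = (X, Y; E) on the vertex type T (a finType):
   X : {set T} is one side, Y := ~: X the other side, and the edge set
   E : {set T * T} consists of pairs (x, y) with x \in X, y \in Y
   (hypothesis E \subset setX X (~: X) in the theorem). *)

Section BipGraph.
Variable T : finType.

Definition badj (E : {set T * T}) (u v : T) : bool :=
  ((u, v) \in E) || ((v, u) \in E).

Definition bdeg (E : {set T * T}) (u : T) : nat := #|[set v | badj E u v]|.

Definition ham_path_in (E : {set T * T}) (V : {set T}) (u v : T) : Prop :=
  exists s : seq T,
    [/\ path (badj E) u s, last u s = v, uniq (u :: s)
      & (u :: s) =i V].

Definition ham_biconn_in (X : {set T}) (E : {set T * T}) (V : {set T}) : Prop :=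
  forall u v, u \in X :&: V -> v \in X :&: V -> u != v -> ham_path_in E V u v.

Definition ham_biconn2p (X : {set T}) (E : {set T * T}) (p : nat) : Prop :=
  forall W : {set T}, #|W :&: X| = #|W :&: ~: X| -> #|W| = 2 * p ->
    ham_biconn_in X E (~: W).

Definition clos_step (X : {set T}) (r : nat) (E : {set T * T}) : {set T * T} :=
  match [pick e : T * T | [&& e.1 \in X, e.2 \notin X, e \notin E
                            & r <= bdeg E e.1 + bdeg E e.2]] with
  | Some e => e |: E
  | None => E
  end.

(* r-biclosure: repeat the step until no such pair remains; at most
   #|T| * #|T| edges can ever be added, so this many iterations suffice. *)
Definition biclosure (X : {set T}) (E : {set T * T}) (r : nat) : {set T * T} :=
  iter (#|T| * #|T|) (clos_step X r) E.

End BipGraph.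

(* Main.v *)
Require Import Defs.
From mathcomp Require Import all_boot.
From mathcomp Require Import zify.
Set Implicit Arguments. Unset Strict Implicit. Unset Printing Implicit Defensive.

Section SeqLemmas.
Variable T : eqType.
Implicit Types (s t l : seq T) (r : rel T).

Lemma sortedP r d l :
  reflect (forall i, i.+1 < size l -> r (nth d l i) (nth d l i.+1)) (sorted r l).
Proof.
case: l => [|a t] /=; first by left.
by apply: (iffP (pathP d)) => H i Hi; apply: H.
Qed.

Lemma sorted_catHL r d s1 s2 : 0 < size s1 -> 0 < size s2 ->
  sorted r (s1 ++ s2) = [&& sorted r s1, r (last d s1) (head d s2) & sorted r s2].
Proof.
case: s1 => // a t _; case: s2 => // b t2 _.
by rewrite /= cat_path /=; case: (path r a t); case: (r _ _); case: (path r b t2).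
Qed.

Lemma head_rev d s : head d (rev s) = last d s.
Proof. by case/lastP: s => // t z; rewrite rev_rcons last_rcons. Qed.

Lemma last_rev d s : last d (rev s) = head d s.
Proof. by case: s => //= a t; rewrite rev_cons last_rcons. Qed.

Lemma last_def d1 d2 s : 0 < size s -> last d1 s = last d2 s.
Proof. by case: s. Qed.

Lemma head_def d1 d2 s : 0 < size s -> head d1 s = head d2 s.
Proof. by case: s. Qed.

Lemma head_cat_ne d s t : 0 < size s -> head d (s ++ t) = head d s.
Proof. by case: s. Qed.

Lemma last_cat_ne d s t : 0 < size t -> last d (s ++ t) = last d t.
Proof. by move=> h; rewrite last_cat (last_def _ d). Qed.

Lemma mem_last_ne d s : 0 < size s -> last d s \in s.
Proof. by case: s => // a t _; exact: (mem_last a t). Qed.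

Lemma mem_head_ne d s : 0 < size s -> head d s \in s.
Proof. by case: s => // a t _; apply: mem_head. Qed.

Lemma uniq_cat_notin s t a : uniq (s ++ t) -> a \in t -> a \notin s.
Proof. by rewrite cat_uniq => /and3P[_ /hasPn H _] /H. Qed.

Lemma uniq_cat_notin2 s t a : uniq (s ++ t) -> a \in s -> a \notin t.
Proof. by rewrite uniq_catC; apply: uniq_cat_notin. Qed.

Lemma split3 l a b : a < b -> b.+1 < size l ->
  exists s1 s2 s3, [/\ l = s1 ++ s2 ++ s3, size s1 = a.+1 & size s2 = b - a].
Proof.
move=> ab bl.
exists (take a.+1 l), (take (b - a) (drop a.+1 l)), (drop (b - a) (drop a.+1 l)).
rewrite !cat_take_drop size_takel ?size_takel ?size_drop; first by [].
- lia.
- lia.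
Qed.

Lemma nth3 d s1 s2 s3 a b : size s1 = a.+1 -> size s2 = b - a -> a < b -> 0 < size s3 ->
  [/\ nth d (s1 ++ s2 ++ s3) a = last d s1, nth d (s1 ++ s2 ++ s3) a.+1 = head d s2,
      nth d (s1 ++ s2 ++ s3) b = last d s2 & nth d (s1 ++ s2 ++ s3) b.+1 = head d s3].
Proof.
move=> h1 h2 ab h3; split.
- by rewrite nth_cat h1 ltnSn -nth_last h1.
- by rewrite nth_cat h1 ltnn subnn nth_cat h2 subn_gt0 ab nth0.
- rewrite nth_cat h1 ltnS leqNgt ab /= nth_cat h2.
  rewrite (_ : b - a.+1 < b - a); last by lia.
  by rewrite -nth_last h2 subnS.
- rewrite nth_cat h1 ltnS leqNgt ltnW //= nth_cat h2 subSS ltnn subnn nth0 //.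
Qed.

Lemma reroute r (rsym : symmetric r) d s1 s2 s3 :
  0 < size s1 -> 0 < size s2 -> 0 < size s3 ->
  sorted r s1 -> sorted r s2 -> sorted r s3 ->
  r (last d s1) (last d s2) -> r (head d s2) (head d s3) ->
  sorted r (s1 ++ rev s2 ++ s3).
Proof.
move=> z1 z2 z3 h1 h2 h3 e1 e2.
rewrite (@sorted_catHL r d) //; last by rewrite size_cat size_rev addn_gt0 z2.
rewrite (@sorted_catHL r d) ?size_rev // h1 h3 head_cat_ne ?size_rev // head_rev e1.
rewrite last_rev e2 rev_sorted /= andbT.
by apply: sub_sorted h2 => p q /=; rewrite rsym.
Qed.

End SeqLemmas.

Section Graph.
Variable T : finType.

Definition HP (E : {set T * T}) (V : {set T}) u v (l : seq T) :=
  [/\ 0 < size l, head u l = u, last u l = v, sorted (badj E) l & uniq l /\ l =i V].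

Lemma hamP E V u v : ham_path_in E V u v <-> exists l, HP E V u v l.
Proof.
split.
- by case=> s [hp hl hu hV]; exists (u :: s); split => //; split.
- by case=> [[|a s]] [] //= _ -> hl hp [hu hV]; exists s; split.
Qed.

Lemma badj_sym (E : {set T * T}) : symmetric (badj E).
Proof. by move=> a b; rewrite /badj orbC. Qed.

Lemma HP_rev E V u v l : HP E V u v l -> HP E V v u (rev l).
Proof.
case=> z hh hl hs [hu hV]; split; last split.
- by rewrite size_rev.
- by rewrite head_rev (last_def v u z) hl.
- by rewrite last_rev (head_def v u z) hh.
- by rewrite rev_sorted; apply: sub_sorted hs => a b /=; rewrite badj_sym.
- by rewrite rev_uniq.
- by move=> w; rewrite mem_rev hV.
Qed.

Lemma adjF (X : {set T}) (F : {set T * T}) a b : F \subset setX X (~: X) -> badj F a b -> (a \in X) = (b \notin X).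
Proof.
move=> /subsetP sF; rewrite /badj => /orP[] /sF; rewrite in_setX in_setC /= => /andP[h1 h2].
- by rewrite h1 h2.
- by rewrite h1 (negbTE h2).
Qed.

Lemma finish (F F' : {set T * T}) (V : {set T}) u v s1 s2 s3 : HP F' V u v (s1 ++ s2 ++ s3) ->
  0 < size s1 -> 0 < size s2 -> 0 < size s3 ->
  sorted (badj F) s1 -> sorted (badj F) s2 -> sorted (badj F) s3 ->
  badj F (last u s1) (last u s2) -> badj F (head u s2) (head u s3) ->
  exists l', HP F V u v l'.
Proof.
move=> [z hh hl hs [hu hV]] z1 z2 z3 h1 h2 h3 e1 e2.
have pe : perm_eq (s1 ++ rev s2 ++ s3) (s1 ++ s2 ++ s3).
  by rewrite perm_cat2l perm_cat2r; apply/permPl; apply: perm_rev.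
exists (s1 ++ rev s2 ++ s3); split; last split.
- by rewrite size_cat addn_gt0 z1.
- by rewrite head_cat_ne // -(head_cat_ne _ (s2 ++ s3) z1).
- have n23 : 0 < size (s2 ++ s3) by rewrite size_cat addn_gt0 z2.
  have n23' : 0 < size (rev s2 ++ s3) by rewrite size_cat addn_gt0 size_rev z2.
  rewrite (last_cat_ne _ _ n23) (last_cat_ne _ _ z3) in hl.
  by rewrite (last_cat_ne _ _ n23') (last_cat_ne _ _ z3).
- exact: (reroute (@badj_sym F) z1 z2 z3 h1 h2 h3 e1 e2).
- by rewrite (perm_uniq pe).
- by move=> w; rewrite (perm_mem pe) hV.
Qed.

End Graph.

Section Core.
Variable T : finType.
Variables (X : {set T}) (E : {set T * T}) (x y : T).
Hypotheses (HE : E \subset setX X (~: X)) (hx : x \in X) (hy : y \notin X)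
  (hxy : (x, y) \notin E).

Lemma E'sub : (x, y) |: E \subset setX X (~: X).
Proof. by rewrite subUset sub1set in_setX in_setC hx hy HE. Qed.

Lemma pieceE s : sorted (badj ((x, y) |: E)) s -> (x \notin s) || (y \notin s) ->
  sorted (badj E) s.
Proof.
move=> hs /orP[] hn.
- apply: (@sub_in_sorted _ (predC1 x) (badj ((x, y) |: E)) (badj E)) hs.
  + move=> a b; rewrite !inE => ha hb.
    case/orP=> [/setU1P[[ea eb]|h]|/setU1P[[ea eb]|h]]; rewrite /badj ?h ?orbT //.
    * by rewrite ea eqxx in ha.
    * by rewrite ea eqxx in hb.
  + apply/allP => w wi; rewrite inE; apply/eqP => e; by rewrite -e wi in hn.
- apply: (@sub_in_sorted _ (predC1 y) (badj ((x, y) |: E)) (badj E)) hs.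
  + move=> a b; rewrite !inE => ha hb.
    case/orP=> [/setU1P[[ea eb]|h]|/setU1P[[ea eb]|h]]; rewrite /badj ?h ?orbT //.
    * by rewrite eb eqxx in hb.
    * by rewrite eb eqxx in ha.
  + apply/allP => w wi; rewrite inE; apply/eqP => e; by rewrite -e wi in hn.
Qed.

Lemma core (V : {set T}) u v l j : HP ((x, y) |: E) V u v l -> j.+1 < size l ->
  nth u l j = x -> nth u l j.+1 = y ->
  #|~: X :&: V| + 2 <= #|[set w in V | badj E x w]| + #|[set w in V | badj E y w]| ->
  exists l', HP E V u v l'.
Proof.
move=> hl0; have [z hh hlast hs [hu hV]] := hl0.
move=> hj hxj hyj hcnt.
have hs' : forall i, i.+1 < size l -> badj ((x, y) |: E) (nth u l i) (nth u l i.+1).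
  by apply/sortedP.
pose Yp := [set i : 'I_(size l) | nth u l i \notin X].
pose A := [set i : 'I_(size l) | badj E x (nth u l i)].
pose B := [set i : 'I_(size l) | (i.+1 < size l) && badj E y (nth u l i.+1)].
have sAY : A \subset Yp.
  by apply/subsetP => i; rewrite !inE => /(adjF HE) h; rewrite -h hx.
have sBY : B \subset Yp.
  apply/subsetP => i; rewrite !inE => /andP[hi1 /(adjF HE)]; rewrite (negbTE hy) => h.
  by have := adjF E'sub (hs' i hi1); rewrite -h => ->.
have injl : injective (fun i : 'I_(size l) => nth u l i).
  by move=> i k /eqP; rewrite nth_uniq // => /eqP /ord_inj.
have cY : #|Yp| <= #|~: X :&: V|.
  rewrite -(card_imset _ injl); apply: subset_leq_card; apply/subsetP => w /imsetP[i].
  by rewrite inE => hi ->; rewrite !inE hi /= -hV (mem_nth u (ltn_ord i)).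
have cA : #|[set w in V | badj E x w]| <= #|A|.
  apply: leq_trans (leq_imset_card (fun i : 'I_(size l) => nth u l i) A).
  apply: subset_leq_card; apply/subsetP => w; rewrite inE => /andP[wV wx].
  have wl : w \in l by rewrite hV.
  have ix : index w l < size l by rewrite index_mem.
  apply/imsetP; exists (Ordinal ix); last by rewrite /= nth_index.
  by rewrite inE /= nth_index.
have cB : #|[set w in V | badj E y w]| <= #|B| + 1.
  have cB1 : #|[set w in V | badj E y w]| <= #|u |: [set nth u l i.+1 | i : 'I_(size l) in B]|.
    apply: subset_leq_card; apply/subsetP => w; rewrite inE => /andP[wV wy].
    case: (eqVneq w u) => [->|wu]; first by rewrite setU11.
    have wl : w \in l by rewrite hV.
    have ix : index w l < size l by rewrite index_mem.
    have i0 : 0 < index w l.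
      rewrite lt0n; apply/eqP => e; move: wu.
      by rewrite -(nth_index u wl) e nth0 hh eqxx.
    have k1 : (index w l).-1 < size l by lia.
    apply/setU1P; right; apply/imsetP; exists (Ordinal k1).
    - by rewrite inE /= prednK // ix nth_index.
    - by rewrite /= prednK // nth_index.
  apply: (leq_trans cB1).
  by rewrite cardsU1 addnC leq_add ?leq_imset_card ?leq_b1.
have : 0 < #|A :&: B|.
  have sU : A :|: B \subset Yp by rewrite subUset sAY sBY.
  have := subset_leq_card sU; rewrite cardsU; lia.
rewrite card_gt0 => /set0Pn[i]; rewrite !inE => /andP[hxi /andP[hi1 hyi]].
have nij : (i : nat) != j.
  apply/eqP => eij; move: hxi; rewrite eij hxj => /(adjF HE).
  by rewrite hx.
have hsz s1 s2 s3 : l = s1 ++ s2 ++ s3 -> size l = size s1 + size s2 + size s3.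
  by move=> ->; rewrite !size_cat addnA.
move: hxi hi1 hyi nij; move: (nat_of_ord i) => {}i hxi hi1 hyi nij.
case: (ltngtP i j) => [ij|ji|eij]; last by rewrite eij eqxx in nij.
- have [s1 [s2 [s3 [el hs1 hs2]]]] := split3 ij hj.
  have z3 : 0 < size s3.
    move: hj; rewrite (hsz _ _ _ el) hs1 hs2 => hj. set k := size s3 in hj *. clearbody k. clear -hj ij. lia.
  have z1 : 0 < size s1 by rewrite hs1.
  have z2 : 0 < size s2 by rewrite hs2 subn_gt0.
  have [n1 n2 n3 n4] := nth3 u hs1 hs2 ij z3.
  rewrite -el in n1 n2 n3 n4.
  rewrite n1 in hxi; rewrite n2 in hyi; rewrite n3 in hxj; rewrite n4 in hyj.
  rewrite el in hl0 hs hu.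
  have [hs1' hs23] := cat_sorted2 hs; have [hs2' hs3'] := cat_sorted2 hs23.
  have y3 : y \in s3 by rewrite -hyj mem_head_ne.
  have yn12 : y \notin s1 ++ s2 by apply: (uniq_cat_notin (t:=s3)); rewrite -?catA.
  rewrite mem_cat negb_or in yn12; case/andP: yn12 => yn1 yn2.
  have x2 : x \in s2 by rewrite -hxj mem_last_ne.
  have xn3 : x \notin s3.
    by apply: (uniq_cat_notin2 (s:=s2)) x2; move: hu; rewrite cat_uniq => /and3P[].
  apply: (finish hl0) => //.
  + by apply: pieceE => //; rewrite yn1 orbT.
  + by apply: pieceE => //; rewrite yn2 orbT.
  + by apply: pieceE => //; rewrite xn3.
  + by rewrite hxj badj_sym.
  + by rewrite hyj badj_sym.
- have [s1 [s2 [s3 [el hs1 hs2]]]] := split3 ji hi1.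
  have z3 : 0 < size s3.
    move: hi1; rewrite (hsz _ _ _ el) hs1 hs2 => hi1. set k := size s3 in hi1 *. clearbody k. clear -hi1 ji. lia.
  have z1 : 0 < size s1 by rewrite hs1.
  have z2 : 0 < size s2 by rewrite hs2 subn_gt0.
  have [n1 n2 n3 n4] := nth3 u hs1 hs2 ji z3.
  rewrite -el in n1 n2 n3 n4.
  rewrite n1 in hxj; rewrite n2 in hyj; rewrite n3 in hxi; rewrite n4 in hyi.
  rewrite el in hl0 hs hu.
  have [hs1' hs23] := cat_sorted2 hs; have [hs2' hs3'] := cat_sorted2 hs23.
  have x1 : x \in s1 by rewrite -hxj mem_last_ne.
  have xn23 : x \notin s2 ++ s3 by apply: (uniq_cat_notin2 (s:=s1)).
  rewrite mem_cat negb_or in xn23; case/andP: xn23 => xn2 xn3.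
  have y2 : y \in s2 by rewrite -hyj mem_head_ne.
  have yn1 : y \notin s1.
    by apply: (uniq_cat_notin (t:=s2)) y2; move: hu; rewrite catA cat_uniq => /and3P[].
  apply: (finish hl0) => //.
  + by apply: pieceE => //; rewrite yn1 orbT.
  + by apply: pieceE => //; rewrite xn2.
  + by apply: pieceE => //; rewrite xn3.
  + by rewrite hxj.
  + by rewrite hyj.
Qed.

End Core.

Section AddEdge.
Variable T : finType.
Variables (X : {set T}) (E : {set T * T}) (x y : T).
Hypotheses (HE : E \subset setX X (~: X)) (hx : x \in X) (hy : y \notin X)
  (hxy : (x, y) \notin E).

Lemma add_edge n p : #|X| = #|~: X| + 1 -> #|T| = 2 * n - 1 ->
  n + p + 1 <= bdeg E x + bdeg E y ->
  ham_biconn2p X ((x, y) |: E) p -> ham_biconn2p X E p.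
Proof.
move=> hX hT hdeg hb W hW1 hW2 u v hu hv huv.
have /hamP[l hl] := hb W hW1 hW2 u v hu hv huv.
apply/hamP.
have dx : bdeg E x <= #|[set w in ~: W | badj E x w]| + #|W :&: ~: X|.
  apply: (@leq_trans #|[set w in ~: W | badj E x w] :|: (W :&: ~: X)|); last first.
    by rewrite cardsU leq_subr.
  apply: subset_leq_card; apply/subsetP => w; rewrite !inE => wx.
  have := adjF HE wx; rewrite hx => /esym wX.
  by rewrite wx wX !andbT; case: (w \in W).
have dy : bdeg E y <= #|[set w in ~: W | badj E y w]| + #|W :&: X|.
  apply: (@leq_trans #|[set w in ~: W | badj E y w] :|: (W :&: X)|); last first.
    by rewrite cardsU leq_subr.
  apply: subset_leq_card; apply/subsetP => w; rewrite !inE => wy.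
  have := adjF HE wy; rewrite (negbTE hy) => /esym/negbFE wX.
  by rewrite wy wX !andbT; case: (w \in W).
have c1 := cardsID X W; rewrite setDE in c1.
have c3 := cardsID W (~: X); rewrite setDE setIC in c3.
have c4 := cardsC X.
have hcnt : #|~: X :&: ~: W| + 2 <=
    #|[set w in ~: W | badj E x w]| + #|[set w in ~: W | badj E y w]|.
  lia.
case: (boolP [exists j : 'I_(size l), (j.+1 < size l) && (nth u l j == x) && (nth u l j.+1 == y)]).
  case/existsP => j /andP[/andP[hj /eqP hxj] /eqP hyj].
  exact: (core HE hx hy hxy hl hj hxj hyj hcnt).
move=> nf.
case: (boolP [exists j : 'I_(size l), (j.+1 < size l) && (nth u l j == y) && (nth u l j.+1 == x)]).
  case/existsP => j /andP[/andP[hj /eqP hyj] /eqP hxj].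
  have hr := HP_rev hl.
  have [z _ _ _ _] := hl.
  pose k := size l - j.+2.
  have hk : k.+1 < size (rev l) by rewrite size_rev /k; lia.
  have e1 : nth v (rev l) k = x.
    rewrite nth_rev; last by rewrite /k; lia.
    rewrite (_ : size l - k.+1 = j.+1); last by rewrite /k; lia.
    by rewrite (set_nth_default u).
  have e2 : nth v (rev l) k.+1 = y.
    rewrite nth_rev; last by rewrite size_rev in hk.
    rewrite (_ : size l - k.+2 = j); last by rewrite /k; lia.
    by rewrite (set_nth_default u) // ltnW.
  have [l' hl'] := (core HE hx hy hxy hr hk e1 e2 hcnt).
  by exists (rev l'); apply: HP_rev hl'.
move=> nb; exists l.
case: hl => z hh hlast hs [hun hV]; split => //; try by split.
have hs' : forall i, i.+1 < size l -> badj ((x, y) |: E) (nth u l i) (nth u l i.+1).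
  by apply/sortedP.
apply/(@sortedP _ _ u) => i hi.
have i' : i < size l by apply: ltnW.
have n1 : ~~ ((nth u l i == x) && (nth u l i.+1 == y)).
  apply: contra nf => h; apply/existsP; exists (Ordinal i'); by rewrite /= hi.
have n2 : ~~ ((nth u l i.+1 == x) && (nth u l i == y)).
  apply: contra nb => h; apply/existsP; exists (Ordinal i'); by rewrite /= hi andbC.
move: (hs' i hi); rewrite /badj !in_setU1 !xpair_eqE (negbTE n1) (negbTE n2).
done.
Qed.

End AddEdge.

Section Closure.
Variable T : finType.
Variable X : {set T}.

Lemma step_sub r (E : {set T * T}) : E \subset clos_step X r E.
Proof. by rewrite /clos_step; case: pickP => [e _|_]; [exact: subsetUr | exact: subxx]. Qed.

Lemma step_bip r (E : {set T * T}) : E \subset setX X (~: X) ->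
  clos_step X r E \subset setX X (~: X).
Proof.
move=> HE; rewrite /clos_step; case: pickP => [[a b] /= /and4P[h1 h2 _ _] | _] //.
by rewrite subUset sub1set in_setX in_setC h1 h2 HE.
Qed.

Lemma step_back n p (E : {set T * T}) : E \subset setX X (~: X) ->
  #|X| = #|~: X| + 1 -> #|T| = 2 * n - 1 ->
  ham_biconn2p X (clos_step X (n + p + 1) E) p -> ham_biconn2p X E p.
Proof.
move=> HE hX hT; rewrite /clos_step; case: pickP => [[a b] /= /and4P[h1 h2 h3 h4] | _] //.
exact: (add_edge HE h1 h2 h3 hX hT h4).
Qed.

Lemma iter_back n p k : forall E : {set T * T}, E \subset setX X (~: X) ->
  #|X| = #|~: X| + 1 -> #|T| = 2 * n - 1 ->
  ham_biconn2p X (iter k (clos_step X (n + p + 1)) E) p -> ham_biconn2p X E p.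
Proof.
elim: k => [|k IH] E HE hX hT h //.
rewrite iterSr in h.
apply: (step_back HE hX hT).
exact: (IH _ (step_bip _ HE) hX hT h).
Qed.

Lemma iter_sub r k (E : {set T * T}) : E \subset iter k (clos_step X r) E.
Proof.
elim: k => [|k IH]; first exact: subxx.
by rewrite iterS; apply: subset_trans IH (step_sub _ _).
Qed.

Lemma hb_mono (E F : {set T * T}) p : E \subset F -> ham_biconn2p X E p -> ham_biconn2p X F p.
Proof.
move=> sEF hb W h1 h2 u v hu hv huv.
have [s [hp hl hu' hV]] := hb W h1 h2 u v hu hv huv.
exists s; split => //.
apply: sub_path hp => a b; rewrite /badj => /orP[] h; apply/orP; [left|right];
  exact: (subsetP sEF).
Qed.

End Closure.

Unset Implicit Arguments.

Theorem lemma2p5 (T : finType) (X : {set T}) (E : {set T * T}) (n p : nat) :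
  E \subset setX X (~: X) ->
  #|X| = #|~: X| + 1 ->
  #|T| = 2 * n - 1 ->
  (ham_biconn2p X E p <-> ham_biconn2p X (biclosure X E (n + p + 1)) p).
Proof.
move=> HE hX hT; split.
- by apply: hb_mono; apply: iter_sub.
- exact: (iter_back HE hX hT).
Qed.
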